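(* Let $I \subset \mathbb{R}$ be a closed interval, let $0<\alpha\le 1$, and let $f:I\to\mathbb{R}$ be $\alpha$-H\''older continuous, i.e. there is $C>0$ with $|f(t)-f(s)|\le C|t-s|^\alpha$ for all $t,s\in I$. Then $$\dim_{A,reg}^\theta \operatorname{Graph}(f) \leq \frac{2-\alpha-\theta}{1-\theta}$$ for all $\theta\in(0,\alpha)$.
   Context: $\operatorname{Graph}(f)=\{(t,f(t)):t\in I\}\subset\mathbb{R}^2$. For a bounded set $F\subset\mathbb{R}^2$ and $r>0$, $N(F,r)$ denotes the least number of sets of diameter at most $r$ needed to cover $F$, and $D(\mathbf z,R)$ is the closed disc of radius $R$ centered at $\mathbf z$. For $E\subset\mathbb{R}^2$ and $\theta\in(0,1)$, the regularized (upper) Assouad spectrum is $$\dim_{A,reg}^\theta(E)=\inf\{\gamma>0:\ \exists C>0 \text{ such that } N(D(\mathbf z,R)\cap E,r)\le C(R/r)^\gamma \text{ for all } 0<r\le R^{1/\theta}<R<1 \text{ and all } \mathbf z\in E\}.$$ Equivalently, $\dim_{A,reg}^\theta(E)=\sup_{0<\theta'<\theta}\dim_A^{\theta'}(E)$, where $\dim_A^{\theta}(E)$ is defined in the same way but with the scales restricted to $r=R^{1/\theta}$. *)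

(* Defs.v *)
From HB Require Import structures.
From mathcomp Require Import all_boot all_order all_algebra.
From mathcomp Require Import all_classical all_reals all_analysis.
Set Implicit Arguments. Unset Strict Implicit. Unset Printing Implicit Defensive.
Import Order.TTheory GRing.Theory Num.Theory.
Local Open Scope classical_set_scope.
Local Open Scope ring_scope.

Section Defs.
Variable R : realType.

Definition dist2 (x y : R * R) : R :=
  Num.sqrt ((x.1 - y.1) ^+ 2 + (x.2 - y.2) ^+ 2).

Definition disc (z : R * R) (rho : R) : set (R * R) :=
  [set w | dist2 z w <= rho].

Definition diam_le (S : set (R * R)) (r : R) : Prop :=
  forall x y, S x -> S y -> dist2 x y <= r.

Definition covers (F : set (R * R)) (r : R) (n : nat) : Prop :=
  exists S : nat -> set (R * R),
    (forall i, (i < n)%N -> diam_le (S i) r) /\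
    F `<=` \bigcup_(i in [set i | (i < n)%N]) S i.

(* N(F, r): least number of sets of diameter <= r covering F (+oo if none) *)
Definition covnum (F : set (R * R)) (r : R) : \bar R :=
  ereal_inf [set (n%:R)%:E | n in covers F r].

Definition graph (f : R -> R) (I : set R) : set (R * R) :=
  [set p | I p.1 /\ p.2 = f p.1].

Definition dimA_reg (theta : R) (E : set (R * R)) : \bar R :=
  ereal_inf [set g%:E | g in
    [set g : R | 0 < g /\ exists C : R, 0 < C /\
       forall (z : R * R) (rho r : R), E z -> 0 < r -> 0 < rho ->
         r <= rho `^ (1 / theta) -> rho `^ (1 / theta) < rho -> rho < 1 ->
         (covnum (disc z rho `&` E) r <= (C * (rho / r) `^ g)%:E)%E]].

End Defs.

(* Main.v *)
Require Import Defs.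
From HB Require Import structures.
From mathcomp Require Import all_boot all_order all_algebra.
From mathcomp Require Import all_classical all_reals all_analysis.
From mathcomp Require Import zify ring lra.
Import Order.TTheory GRing.Theory Num.Theory.
Local Open Scope classical_set_scope.
Local Open Scope ring_scope.

Lemma sqr_le_dist {R : realType} (z p : R * R) : `|z.1 - p.1| <= dist2 z p.
Proof.
rewrite /dist2 -sqrtr_sqr; apply: ler_wsqrtr.
rewrite lerDl; exact: sqr_ge0.
Qed.

Lemma cover_lemma (R : realType) (a b : R) (f : R -> R) (alpha Cf : R) :
  0 < alpha -> 0 < Cf ->
  (forall t s : R, a <= t <= b -> a <= s <= b ->
       `|f t - f s| <= Cf * `|t - s| `^ alpha) ->
  forall (z : R * R) (rho r : R), 0 < r -> 0 < rho ->
  covers (disc z rho `&` graph f [set t : R | (a <= t <= b)%R]) r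
    ((Num.truncn (2 * rho / (r / 2))).+1 *
     (Num.truncn (2 * Cf * (r / 2) `^ alpha / (r / 2))).+1)%N.
Proof.
move=> ha0 Cf0 Hf z rho r r0 rho0.
set h := r / 2.
have h0 : 0 < h by rewrite /h; lra.
set N := (Num.truncn (2 * rho / h)).+1.
set M := (Num.truncn (2 * Cf * h `^ alpha / h)).+1.
pose x0 := z.1 - rho.
pose c (j : nat) := x0 + j%:R * h.
pose u j := Num.max a (c j).
pose y j := f (u j) - Cf * h `^ alpha.
pose cell (j k : nat) := [set p : R * R | (c j <= p.1 <= c j + h) /\
                            (y j + k%:R * h <= p.2 <= y j + k%:R * h + h)].
exists (fun i => cell (i %/ M)%N (i %% M)%N); split.
  move=> i _ p q [/andP[hp1 hp2] /andP[hp3 hp4]] [/andP[hq1 hq2] /andP[hq3 hq4]].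
  rewrite /dist2.
  have -> : r = Num.sqrt (r ^+ 2) by rewrite sqrtr_sqr gtr0_norm.
  apply: ler_wsqrtr.
  have e1 : (p.1 - q.1) ^+ 2 <= h ^+ 2 by nra.
  have e2 : (p.2 - q.2) ^+ 2 <= h ^+ 2 by nra.
  have -> : r = 2 * h by rewrite /h; field.
  nra.
move=> p [hd [/andP [pa pb] hpf]].
have hd1 : `|z.1 - p.1| <= rho by apply: le_trans (sqr_le_dist z p : _ <= _) hd.
set t := p.1 in pa pb hpf hd1 *.
have ht0 : 0 <= (t - x0) / h.
  apply: divr_ge0; last exact: ltW.
  rewrite /x0; move: hd1; rewrite ler_norml => /andP[? ?]; lra.
set j := Num.truncn ((t - x0) / h).
have /andP [hj1 hj2] := truncn_itv ht0.
rewrite -/j in hj1 hj2.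
have e : (t - x0) / h * h = t - x0 by rewrite divfK // gt_eqF.
have hcj1 : c j <= t by rewrite /c; nra.
have hcj2 : t < c j + h by rewrite /c; move: hj2; rewrite -natr1; nra.
have hjN : (j < N)%N.
  have h1 : (t - x0) / h <= 2 * rho / h.
    apply: ler_wpM2r; first by rewrite invr_ge0 ltW.
    rewrite /x0; move: hd1; rewrite ler_norml => /andP[? ?]; lra.
  have h2 := truncnS_gt (2 * rho / h).
  rewrite -(ltr_nat R); rewrite /N; lra.
have m1 : a <= u j by rewrite /u le_max lexx.
have m2 : c j <= u j by rewrite /u le_max lexx orbT.
have m3 : u j <= t by rewrite /u ge_max pa hcj1.
have hu1 : a <= u j <= b by apply/andP; split; lra.
have hu2 : `|t - u j| <= h by rewrite ler_norml; apply/andP; split; lra.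
have hft : `|f t - f (u j)| <= Cf * h `^ alpha.
  apply: (le_trans (Hf t (u j) _ hu1)); first by apply/andP; split.
  rewrite ler_pM2l //; apply: ge0_ler_powR; [exact: ltW | by rewrite nnegrE | by rewrite nnegrE ltW | by []].
set v := f t - y j.
have hv : 0 <= v <= 2 * Cf * h `^ alpha.
  move: hft; rewrite /v /y ler_norml => /andP[? ?]; apply/andP; split; lra.
have hv0 : 0 <= v / h by apply: divr_ge0; [case/andP: hv | exact: ltW].
set k := Num.truncn (v / h).
have /andP [hk1 hk2] := truncn_itv hv0.
rewrite -/k in hk1 hk2.
have e2 : v / h * h = v by rewrite divfK // gt_eqF.
have hkM : (k < M)%N.
  have h1 : v / h <= 2 * Cf * h `^ alpha / h.
    apply: ler_wpM2r; first by rewrite invr_ge0 ltW.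
    by case/andP: hv.
  have h2 := truncnS_gt (2 * Cf * h `^ alpha / h).
  rewrite -(ltr_nat R); rewrite /M; lra.
have hk3 : k%:R * h <= v by rewrite -e2; apply: ler_wpM2r => //; exact: ltW.
have hk4 : v < k%:R * h + h.
  rewrite -e2 -[X in _ + X]mul1r -mulrDl natr1; by rewrite ltr_pM2r.
exists (j * M + k)%N.
  rewrite /=. 
  have : (j * M + k < j * M + M)%N by rewrite ltn_add2l.
  move=> /leq_trans; apply.
  by rewrite -[X in (_ + X <= _)%N]mul1n -mulnDl addn1 leq_mul2r hjN orbT.
have M0 : (0 < M)%N by [].
rewrite /= divnMDl // divn_small // addn0 modnMDl modn_small //.
split; apply/andP; split; rewrite ?hpf; rewrite /v in hk3 hk4; lra.
Qed.

Lemma count_bound (R : realType) (alpha th Cf rho r : R) :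
  0 < alpha -> alpha <= 1 -> 0 < th -> th < alpha -> 0 < Cf -> 0 < r -> 0 < rho ->
  r <= rho `^ (1 / th) -> rho `^ (1 / th) < rho ->
  (((Num.truncn (2 * rho / (r / 2))).+1 *
     (Num.truncn (2 * Cf * (r / 2) `^ alpha / (r / 2))).+1)%N%:R
   <= 5 * (4 * Cf + 1) * (rho / r) `^ ((2 - alpha - th) / (1 - th)) :> R).
Proof.
move=> ha0 ha1 th0 thal Cf0 r0 rho0 hr hrr.
set q := rho / r.
set e := (1 - alpha) / (1 - th).
have th1 : th < 1 by lra.
have e0 : 0 <= e by apply: divr_ge0; lra.
have q1 : 1 <= q by rewrite /q ler_pdivlMr // mul1r; lra.
have q0 : 0 < q by lra.
have qe1 : 1 <= q `^ e by rewrite -(powRr0 q); apply: ler_powR.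
have rth : r `^ th <= rho.
  have := @ge0_ler_powR R th (ltW th0) r (rho `^ (1/th)).
  rewrite !nnegrE powR_ge0 => /(_ (ltW r0) isT hr).
  by rewrite -powRrM mul1r mulVf ?gt_eqF // powRr1 // ltW.
have key : r `^ alpha / r <= q `^ e.
  have -> : r `^ alpha / r = (r `^ (th - 1)) `^ e.
    rewrite -powRrM.
    have -> : (th - 1) * e = alpha - 1 by rewrite /e; field; lra.
    by rewrite powRB ?powRr1 ?(ltW r0) //; apply/implyP => _; rewrite gt_eqF.
  apply: (@ge0_ler_powR R e e0); rewrite ?nnegrE ?powR_ge0 //; first exact: ltW.
  rewrite powRB; last by apply/implyP => _; rewrite gt_eqF.
  rewrite powRr1 ?(ltW r0) // /q.
  by apply: ler_wpM2r; rewrite ?invr_ge0 // ltW.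
have hN : (Num.truncn (2 * rho / (r / 2))).+1%:R <= 5 * q.
  have := truncn_le (2 * rho / (r / 2)).
  have -> : 0 <= 2 * rho / (r / 2) by apply: divr_ge0; lra.
  move=> h; rewrite -natr1.
  have -> : 2 * rho / (r / 2) = 4 * q by rewrite /q; field; lra.
  move: h; have -> : 2 * rho / (r / 2) = 4 * q by rewrite /q; field; lra.
  lra.
have hM : (Num.truncn (2 * Cf * (r / 2) `^ alpha / (r / 2))).+1%:R
          <= (4 * Cf + 1) * q `^ e.
  set w := 2 * Cf * (r / 2) `^ alpha / (r / 2).
  have w0 : 0 <= w by apply: divr_ge0; [apply: mulr_ge0; [lra | exact: powR_ge0] | lra].
  have := truncn_le w; rewrite w0 => h; rewrite -natr1.
  have hw : w <= 4 * Cf * (r `^ alpha / r).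
    have ra : (r / 2) `^ alpha <= r `^ alpha.
      apply: ge0_ler_powR; rewrite ?nnegrE; try lra.
    have -> : w = 4 * Cf * ((r / 2) `^ alpha / r) by rewrite /w; field; lra.
    rewrite ler_pM2l; last lra.
    by apply: ler_wpM2r; rewrite ?invr_ge0 //; apply: ltW.
  have : 4 * Cf * (r `^ alpha / r) <= 4 * Cf * q `^ e by rewrite ler_pM2l //; lra.
  lra.
rewrite natrM.
have -> : (2 - alpha - th) / (1 - th) = 1 + e by rewrite /e; field; lra.
rewrite powRD; last by apply/implyP => _; rewrite gt_eqF.
rewrite powRr1 ?(ltW q0) //.
have : (Num.truncn (2 * rho / (r / 2))).+1%:R * (Num.truncn (2 * Cf * (r / 2) `^ alpha / (r / 2))).+1%:R
   <= 5 * q * ((4 * Cf + 1) * q `^ e).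
  by apply: ler_pM => //.
move=> /le_trans; apply.
by rewrite le_eqVlt; apply/orP; left; apply/eqP; ring.
Qed.

Theorem theorem1p1 (R : realType) (a b : R) (f : R -> R) (alpha : R) :
  a <= b -> 0 < alpha -> alpha <= 1 ->
  (exists C : R, 0 < C /\
     forall t s : R, a <= t <= b -> a <= s <= b ->
       `|f t - f s| <= C * `|t - s| `^ alpha) ->
  forall theta : R, 0 < theta -> theta < alpha ->
    (dimA_reg theta (graph f [set t : R | (a <= t <= b)%R])
      <= ((2 - alpha - theta) / (1 - theta))%:E)%E.
Proof.
move=> hab ha0 ha1 [Cf [Cf0 Hf]] th th0 thal.
apply: ereal_inf_lbound.
exists ((2 - alpha - th) / (1 - th)) => //.
split; first by apply: divr_gt0; lra.
exists (5 * (4 * Cf + 1)); split; first lra.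
move=> z rho r Ez r0 rho0 hr hrr hr1.
apply: le_trans (_ : ((((Num.truncn (2 * rho / (r / 2))).+1 *
     (Num.truncn (2 * Cf * (r / 2) `^ alpha / (r / 2))).+1)%N%:R)%:E <= _)%E).
  apply: ereal_inf_lbound; eexists; last reflexivity.
  exact: cover_lemma.
rewrite lee_fin; exact: count_bound.
Qed.
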